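(* Let $n_0$ be a positive integer and let $X$ be a semiprime complex Banach algebra with identity. Let $\phi,\psi:X^2\to[0,\infty)$ and $f:X\to X$ with $f(0)=0$ satisfy $$\|f(xyx)-f(x)yx-xf(y)x-xyf(x)\|\le\psi(x,y),$$ $$\|f(2\mu x+\mu y)+f(\mu x+2\mu y)-\mu[f(3x)+f(3y)]\|\le\phi(x,y)$$ for all $x,y\in X$ and all $\mu\in\mathbb{T}^1_{n_0}$. Assume there exists $0<L<1$ such that for all $x,y\in X$ $$\tfrac12\phi(2x,2y)\le L\phi(x,y),\qquad \lim_{k\to\infty}8^{-k}\psi(2^kx,2^ky)=0,\qquad \lim_{k\to\infty}4^{-k}\psi(2^kx,y)=0.$$ Then $f$ is a linear derivation.
   Context: $\mathbb{T}^1_{n_0}:=\{e^{i\theta}: 0\le\theta\le 2\pi/n_0\}$. An algebra $X$ is semiprime if $aXa=\{0\}$ for some $a\in X$ implies $a=0$. A linear derivation is a $\mathbb{C}$-linear map $D:X\to X$ with $D(xy)=D(x)y+xD(y)$ for all $x,y\in X$. *)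

(* Defs.v *)
From HB Require Import structures.
From mathcomp Require Import all_boot all_order all_algebra.
From mathcomp Require Import all_classical all_reals all_analysis.
From mathcomp Require Import complex.
Set Implicit Arguments. Unset Strict Implicit. Unset Printing Implicit Defensive.
Import Order.TTheory GRing.Theory Num.Theory.
Import numFieldNormedType.Exports.
Local Open Scope ring_scope.

(* Banach algebra with identity over a numeric field K: a complete normed
   K-module X equipped with an associative, K-bilinear multiplication with a
   (nonzero) identity element, whose norm is submultiplicative.
   (The multiplication is given as a mixin on top of CompleteNormedModule,
   because Hierarchy-Builder does not accept a join of GRing.Algebra with
   NormedModule.) *)
HB.mixin Record CompleteNormedModule_isBanachAlgebra (K : numFieldType) X
  of CompleteNormedModule K X := {
  bamul : X -> X -> X;
  baone : X;
  bamulA : forall x y z : X, bamul x (bamul y z) = bamul (bamul x y) z;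
  bamul1l : forall x : X, bamul baone x = x;
  bamul1r : forall x : X, bamul x baone = x;
  bamulDl : forall x y z : X, bamul (x + y) z = bamul x z + bamul y z;
  bamulDr : forall x y z : X, bamul x (y + z) = bamul x y + bamul x z;
  bamulZl : forall (a : K) (x y : X), bamul (a *: x) y = a *: bamul x y;
  bamulZr : forall (a : K) (x y : X), bamul x (a *: y) = a *: bamul x y;
  baone_neq0 : baone != 0;
  banormM : forall x y : X, `|bamul x y| <= `|x| * `|y|
}.

#[short(type="banachAlgType")]
HB.structure Definition BanachAlgebra (K : numFieldType) :=
  { X of CompleteNormedModule_isBanachAlgebra K X & CompleteNormedModule K X }.

Notation "x ** y" := (bamul x y) (at level 40, left associativity) : ring_scope.

Definition semiprime (K : numFieldType) (X : banachAlgType K) : Prop :=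
  forall a : X, (forall x : X, a ** x ** a = 0) -> a = 0.

Definition circle_arc (R : realType) (n0 : nat) : set R[i] :=
  [set mu | exists theta : R,
     0 <= theta <= 2 * pi / n0%:R /\ mu = (cos theta +i* sin theta)%C].

Definition linear_derivation (K : numFieldType) (X : banachAlgType K)
  (D : X -> X) : Prop :=
  (forall (a : K) (x y : X), D (a *: x + y) = a *: D x + D y) /\
  (forall x y : X, D (x ** y) = D x ** y + x ** D y).

(* Main.v *)
Require Import Defs.
From HB Require Import structures.
From mathcomp Require Import all_boot all_order all_algebra.
From mathcomp Require Import all_classical all_reals all_analysis.
From mathcomp Require Import complex.
From mathcomp Require Import ring lra.
Import Order.TTheory GRing.Theory Num.Theory.
Import numFieldNormedType.Exports.
Local Open Scope ring_scope.

Inductive zexp := ZAtom of nat | ZAdd of zexp & zexp | ZOpp of zexp | ZZero.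

Section ZE.
Context (V : zmodType).
Fixpoint zeval (env : seq V) (e : zexp) : V :=
  match e with
  | ZAtom n => nth 0 env n
  | ZAdd a b => zeval env a + zeval env b
  | ZOpp a => - zeval env a
  | ZZero => 0
  end.
Fixpoint zcoef (e : zexp) (i : nat) : int :=
  match e with
  | ZAtom n => (n == i)%:Z
  | ZAdd a b => zcoef a i + zcoef b i
  | ZOpp a => - zcoef a i
  | ZZero => 0
  end.
Lemma zeval_sum env e :
  zeval env e = \sum_(i < size env) nth 0 env i *~ zcoef e i.
Proof.
elim: e => [n|a iha b ihb|a iha|] /=.
- case: (ltnP n (size env)) => hn.
    rewrite (bigD1 (Ordinal hn)) //= eqxx mulr1z big1 ?addr0 // => j hj.
    by rewrite eq_sym; move: hj; rewrite -val_eqE /= => /negbTE ->.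
  rewrite nth_default // big1 // => j _.
  by rewrite (_ : (n == j) = false) //; apply/negbTE; rewrite neq_ltn (leq_trans (ltn_ord j) hn) orbT.
- by rewrite iha ihb -big_split /=; apply: eq_bigr => i _; rewrite mulrzDr.
- by rewrite iha -sumrN; apply: eq_bigr => i _; rewrite mulrNz.
- by rewrite big1 // => i _; rewrite mulr0z.
Qed.
Lemma zeval_eq env e1 e2 n : size env = n ->
  all (fun i => zcoef e1 i == zcoef e2 i) (iota 0 n) ->
  zeval env e1 = zeval env e2.
Proof.
move=> <- /allP h; rewrite !zeval_sum; apply: eq_bigr => i _.
by rewrite (eqP (h i _)) // mem_iota /=.
Qed.
End ZE.

Ltac zlist_index x l :=
  match l with
  | x :: _ => constr:(0%N)
  | ?y :: _ => let _ := constr:(ltac:(unify x y; exact 0%N) : nat) in constr:(0%N)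
  | _ :: ?l' => let n := zlist_index x l' in constr:(n.+1)
  end.
Ltac zadd_atom x l :=
  match l with
  | context [x] => l
  | _ => constr:(rcons l x)
  end.
Ltac zatoms t l :=
  match t with
  | ?a + ?b => let l1 := zatoms a l in zatoms b l1
  | - ?a => zatoms a l
  | 0 => l
  | _ => match l with
         | _ => let _ := zlist_index t l in l
         | _ => constr:(t :: l)
         end
  end.
Ltac zlen l :=
  match l with
  | nil => constr:(0%N)
  | _ :: ?l' => let n := zlen l' in constr:(n.+1)
  end.
Ltac zreify t l :=
  match t with
  | ?a + ?b => let ra := zreify a l in let rb := zreify b l in constr:(ZAdd ra rb)
  | - ?a => let ra := zreify a l in constr:(ZOpp ra)
  | 0 => constr:(ZZero)
  | _ => let n := zlist_index t l in constr:(ZAtom n)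
  end.
Ltac zmod_eq :=
  match goal with
  | |- @eq ?V ?lhs ?rhs =>
    let l0 := constr:(@nil V) in
    let l1 := zatoms lhs l0 in
    let l := zatoms rhs l1 in
    let e1 := zreify lhs l in
    let e2 := zreify rhs l in
    let n := zlen l in
    change (@zeval _ l e1 = @zeval _ l e2);
    apply: (@zeval_eq _ l e1 e2 n); [reflexivity | vm_compute; reflexivity]
  end.


Lemma zlem1 (V : zmodType) (g1 g2 h1 h2 : V) : h1 = h2 -> g1 - g2 = h1 - h2 -> g1 = g2.
Proof. by move=> -> /eqP; rewrite subrr subr_eq0 => /eqP. Qed.
Lemma zlem2 (V : zmodType) (g1 g2 h1 h2 k1 k2 : V) : h1 = h2 -> k1 = k2 ->
  g1 - g2 = (h1 - h2) + (k1 - k2) -> g1 = g2.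
Proof. by move=> -> -> /eqP; rewrite !subrr addr0 subr_eq0 => /eqP. Qed.
Lemma zlem3 (V : zmodType) (g1 g2 h1 h2 k1 k2 m1 m2 : V) : h1 = h2 -> k1 = k2 -> m1 = m2 ->
  g1 - g2 = (h1 - h2) + (k1 - k2) + (m1 - m2) -> g1 = g2.
Proof. by move=> -> -> -> /eqP; rewrite !subrr !addr0 subr_eq0 => /eqP. Qed.
Lemma zlem4 (V : zmodType) (g1 g2 h1 h2 k1 k2 m1 m2 n1 n2 : V) : h1 = h2 -> k1 = k2 -> m1 = m2 -> n1 = n2 ->
  g1 - g2 = (h1 - h2) + (k1 - k2) + (m1 - m2) + (n1 - n2) -> g1 = g2.
Proof. by move=> -> -> -> -> /eqP; rewrite !subrr !addr0 subr_eq0 => /eqP. Qed.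

Section Alg.
Context (K : numFieldType) (X : banachAlgType K).
Implicit Types a b c d x y z u r s : X.

Lemma bamul0l x : 0 ** x = 0 :> X.
Proof. by apply: (@addrI _ (0 ** x)); rewrite -bamulDl !addr0. Qed.
Lemma bamul0r x : x ** 0 = 0 :> X.
Proof. by apply: (@addrI _ (x ** 0)); rewrite -bamulDr !addr0. Qed.
Lemma bamulNl x y : (- x) ** y = - (x ** y).
Proof. by apply/eqP; rewrite -subr_eq0 opprK -bamulDl addNr bamul0l. Qed.
Lemma bamulNr x y : x ** (- y) = - (x ** y).
Proof. by apply/eqP; rewrite -subr_eq0 opprK -bamulDr addNr bamul0r. Qed.
Lemma bamulBl x y z : (x - y) ** z = x ** z - y ** z.
Proof. by rewrite bamulDl bamulNl. Qed.
Lemma bamulBr x y z : z ** (x - y) = z ** x - z ** y.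
Proof. by rewrite bamulDr bamulNr. Qed.

Lemma two_tor (t : X) : t + t = 0 -> t = 0.
Proof.
move=> h; have : (2 : K) *: t = 0 by rewrite scaler_nat mulr2n.
move/eqP; rewrite scaler_eq0 => /orP[|/eqP //].
by rewrite pnatr_eq0.
Qed.

Lemma sp_anti (sp : semiprime X) a b :
  (forall u, a ** u ** b + b ** u ** a = 0) -> forall u, a ** u ** b = 0.
Proof.
move=> H.
have Hl l u : l ** a ** u ** b = - (l ** b ** u ** a).
  apply/eqP; rewrite -subr_eq0 opprK.
  by rewrite -!bamulA -bamulDr !bamulA H bamul0r.
move=> x; apply: sp => y.
have e1 := Hl baone (x ** b ** y ** a ** x); rewrite ?bamulA ?bamul1l in e1.
have e2 := Hl baone x; rewrite ?bamulA ?bamul1l in e2.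
have e3 := Hl (b ** x) (y ** a ** x); rewrite ?bamulA in e3.
apply: two_tor. rewrite ?bamulA.
rewrite {1}e1; rewrite e2 !bamulNl e3 opprK.
by rewrite addNr.
Qed.

End Alg.
Ltac anorm := rewrite ?bamulDr ?bamulDl ?bamulNr ?bamulNl ?bamulA ?bamul1l ?bamul1r ?bamul0l ?bamul0r ?opprK ?addr0 ?add0r ?oppr0.
Ltac zfin := anorm; zmod_eq.
Ltac zfrom1 V h := first [ apply: (@zlem1 V _ _ _ _ h); zfin | apply: (@zlem1 V _ _ _ _ (esym h)); zfin ].
Ltac zfrom2 V h1 h2 := first [ apply: (@zlem2 V _ _ _ _ _ _ h1 h2); zfin | apply: (@zlem2 V _ _ _ _ _ _ (esym h1) h2); zfin
  | apply: (@zlem2 V _ _ _ _ _ _ h1 (esym h2)); zfin | apply: (@zlem2 V _ _ _ _ _ _ (esym h1) (esym h2)); zfin ].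
Ltac zs h := first [ exact h | exact (esym h) ].
Ltac zfrom3 V h1 h2 h3 := first [ apply: (@zlem3 V _ _ _ _ _ _ _ _ h1 h2 h3); zfin | apply: (@zlem3 V _ _ _ _ _ _ _ _ (esym h1) h2 h3); zfin
  | apply: (@zlem3 V _ _ _ _ _ _ _ _ h1 (esym h2) h3); zfin | apply: (@zlem3 V _ _ _ _ _ _ _ _ (esym h1) (esym h2) h3); zfin
  | apply: (@zlem3 V _ _ _ _ _ _ _ _ h1 h2 (esym h3)); zfin | apply: (@zlem3 V _ _ _ _ _ _ _ _ (esym h1) h2 (esym h3)); zfin
  | apply: (@zlem3 V _ _ _ _ _ _ _ _ h1 (esym h2) (esym h3)); zfin | apply: (@zlem3 V _ _ _ _ _ _ _ _ (esym h1) (esym h2) (esym h3)); zfin ].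
Ltac zfrom4 V h1 h2 h3 h4 := first [ zfrom3 V h1 h2 h3 | 
  first [ apply: (@zlem4 V _ _ _ _ _ _ _ _ _ _ h1 h2 h3 h4); zfin | apply: (@zlem4 V _ _ _ _ _ _ _ _ _ _ (esym h1) h2 h3 h4); zfin
  | apply: (@zlem4 V _ _ _ _ _ _ _ _ _ _ h1 (esym h2) h3 h4); zfin | apply: (@zlem4 V _ _ _ _ _ _ _ _ _ _ (esym h1) (esym h2) h3 h4); zfin
  | apply: (@zlem4 V _ _ _ _ _ _ _ _ _ _ h1 h2 (esym h3) h4); zfin | apply: (@zlem4 V _ _ _ _ _ _ _ _ _ _ (esym h1) h2 (esym h3) h4); zfin
  | apply: (@zlem4 V _ _ _ _ _ _ _ _ _ _ h1 (esym h2) (esym h3) h4); zfin | apply: (@zlem4 V _ _ _ _ _ _ _ _ _ _ (esym h1) (esym h2) (esym h3) h4); zfin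
  | apply: (@zlem4 V _ _ _ _ _ _ _ _ _ _ h1 h2 h3 (esym h4)); zfin | apply: (@zlem4 V _ _ _ _ _ _ _ _ _ _ (esym h1) h2 h3 (esym h4)); zfin
  | apply: (@zlem4 V _ _ _ _ _ _ _ _ _ _ h1 (esym h2) h3 (esym h4)); zfin | apply: (@zlem4 V _ _ _ _ _ _ _ _ _ _ (esym h1) (esym h2) h3 (esym h4)); zfin
  | apply: (@zlem4 V _ _ _ _ _ _ _ _ _ _ h1 h2 (esym h3) (esym h4)); zfin | apply: (@zlem4 V _ _ _ _ _ _ _ _ _ _ (esym h1) h2 (esym h3) (esym h4)); zfin
  | apply: (@zlem4 V _ _ _ _ _ _ _ _ _ _ h1 (esym h2) (esym h3) (esym h4)); zfin | apply: (@zlem4 V _ _ _ _ _ _ _ _ _ _ (esym h1) (esym h2) (esym h3) (esym h4)); zfin ] ].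

Lemma zL1 (V : zmodType) (g1 g2 l0 r0 : V) (h0 : l0 = r0) :
  g1 - g2 = (l0 - r0) -> g1 = g2.
Proof. by move: h0 => -> /eqP; rewrite !subrr ?addr0 subr_eq0 => /eqP. Qed.
Ltac zl1 V h0 := apply: (@zL1 V _ _ _ _ h0); zfin.
Lemma zL2 (V : zmodType) (g1 g2 l0 r0 l1 r1 : V) (h0 : l0 = r0) (h1 : l1 = r1) :
  g1 - g2 = (l0 - r0) + (l1 - r1) -> g1 = g2.
Proof. by move: h0 h1 => -> -> /eqP; rewrite !subrr ?addr0 subr_eq0 => /eqP. Qed.
Ltac zl2 V h0 h1 := apply: (@zL2 V _ _ _ _ _ _ h0 h1); zfin.
Lemma zL3 (V : zmodType) (g1 g2 l0 r0 l1 r1 l2 r2 : V) (h0 : l0 = r0) (h1 : l1 = r1) (h2 : l2 = r2) :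
  g1 - g2 = (l0 - r0) + (l1 - r1) + (l2 - r2) -> g1 = g2.
Proof. by move: h0 h1 h2 => -> -> -> /eqP; rewrite !subrr ?addr0 subr_eq0 => /eqP. Qed.
Ltac zl3 V h0 h1 h2 := apply: (@zL3 V _ _ _ _ _ _ _ _ h0 h1 h2); zfin.
Lemma zL4 (V : zmodType) (g1 g2 l0 r0 l1 r1 l2 r2 l3 r3 : V) (h0 : l0 = r0) (h1 : l1 = r1) (h2 : l2 = r2) (h3 : l3 = r3) :
  g1 - g2 = (l0 - r0) + (l1 - r1) + (l2 - r2) + (l3 - r3) -> g1 = g2.
Proof. by move: h0 h1 h2 h3 => -> -> -> -> /eqP; rewrite !subrr ?addr0 subr_eq0 => /eqP. Qed.
Ltac zl4 V h0 h1 h2 h3 := apply: (@zL4 V _ _ _ _ _ _ _ _ _ _ h0 h1 h2 h3); zfin.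
Lemma zL5 (V : zmodType) (g1 g2 l0 r0 l1 r1 l2 r2 l3 r3 l4 r4 : V) (h0 : l0 = r0) (h1 : l1 = r1) (h2 : l2 = r2) (h3 : l3 = r3) (h4 : l4 = r4) :
  g1 - g2 = (l0 - r0) + (l1 - r1) + (l2 - r2) + (l3 - r3) + (l4 - r4) -> g1 = g2.
Proof. by move: h0 h1 h2 h3 h4 => -> -> -> -> -> /eqP; rewrite !subrr ?addr0 subr_eq0 => /eqP. Qed.
Ltac zl5 V h0 h1 h2 h3 h4 := apply: (@zL5 V _ _ _ _ _ _ _ _ _ _ _ _ h0 h1 h2 h3 h4); zfin.
Lemma zL6 (V : zmodType) (g1 g2 l0 r0 l1 r1 l2 r2 l3 r3 l4 r4 l5 r5 : V) (h0 : l0 = r0) (h1 : l1 = r1) (h2 : l2 = r2) (h3 : l3 = r3) (h4 : l4 = r4) (h5 : l5 = r5) :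
  g1 - g2 = (l0 - r0) + (l1 - r1) + (l2 - r2) + (l3 - r3) + (l4 - r4) + (l5 - r5) -> g1 = g2.
Proof. by move: h0 h1 h2 h3 h4 h5 => -> -> -> -> -> -> /eqP; rewrite !subrr ?addr0 subr_eq0 => /eqP. Qed.
Ltac zl6 V h0 h1 h2 h3 h4 h5 := apply: (@zL6 V _ _ _ _ _ _ _ _ _ _ _ _ _ _ h0 h1 h2 h3 h4 h5); zfin.
Lemma zL7 (V : zmodType) (g1 g2 l0 r0 l1 r1 l2 r2 l3 r3 l4 r4 l5 r5 l6 r6 : V) (h0 : l0 = r0) (h1 : l1 = r1) (h2 : l2 = r2) (h3 : l3 = r3) (h4 : l4 = r4) (h5 : l5 = r5) (h6 : l6 = r6) :
  g1 - g2 = (l0 - r0) + (l1 - r1) + (l2 - r2) + (l3 - r3) + (l4 - r4) + (l5 - r5) + (l6 - r6) -> g1 = g2.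
Proof. by move: h0 h1 h2 h3 h4 h5 h6 => -> -> -> -> -> -> -> /eqP; rewrite !subrr ?addr0 subr_eq0 => /eqP. Qed.
Ltac zl7 V h0 h1 h2 h3 h4 h5 h6 := apply: (@zL7 V _ _ _ _ _ _ _ _ _ _ _ _ _ _ _ _ h0 h1 h2 h3 h4 h5 h6); zfin.
Lemma zL8 (V : zmodType) (g1 g2 l0 r0 l1 r1 l2 r2 l3 r3 l4 r4 l5 r5 l6 r6 l7 r7 : V) (h0 : l0 = r0) (h1 : l1 = r1) (h2 : l2 = r2) (h3 : l3 = r3) (h4 : l4 = r4) (h5 : l5 = r5) (h6 : l6 = r6) (h7 : l7 = r7) :
  g1 - g2 = (l0 - r0) + (l1 - r1) + (l2 - r2) + (l3 - r3) + (l4 - r4) + (l5 - r5) + (l6 - r6) + (l7 - r7) -> g1 = g2.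
Proof. by move: h0 h1 h2 h3 h4 h5 h6 h7 => -> -> -> -> -> -> -> -> /eqP; rewrite !subrr ?addr0 subr_eq0 => /eqP. Qed.
Ltac zl8 V h0 h1 h2 h3 h4 h5 h6 h7 := apply: (@zL8 V _ _ _ _ _ _ _ _ _ _ _ _ _ _ _ _ _ _ h0 h1 h2 h3 h4 h5 h6 h7); zfin.
Lemma zL9 (V : zmodType) (g1 g2 l0 r0 l1 r1 l2 r2 l3 r3 l4 r4 l5 r5 l6 r6 l7 r7 l8 r8 : V) (h0 : l0 = r0) (h1 : l1 = r1) (h2 : l2 = r2) (h3 : l3 = r3) (h4 : l4 = r4) (h5 : l5 = r5) (h6 : l6 = r6) (h7 : l7 = r7) (h8 : l8 = r8) :
  g1 - g2 = (l0 - r0) + (l1 - r1) + (l2 - r2) + (l3 - r3) + (l4 - r4) + (l5 - r5) + (l6 - r6) + (l7 - r7) + (l8 - r8) -> g1 = g2.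
Proof. by move: h0 h1 h2 h3 h4 h5 h6 h7 h8 => -> -> -> -> -> -> -> -> -> /eqP; rewrite !subrr ?addr0 subr_eq0 => /eqP. Qed.
Ltac zl9 V h0 h1 h2 h3 h4 h5 h6 h7 h8 := apply: (@zL9 V _ _ _ _ _ _ _ _ _ _ _ _ _ _ _ _ _ _ _ _ h0 h1 h2 h3 h4 h5 h6 h7 h8); zfin.
Lemma zL10 (V : zmodType) (g1 g2 l0 r0 l1 r1 l2 r2 l3 r3 l4 r4 l5 r5 l6 r6 l7 r7 l8 r8 l9 r9 : V) (h0 : l0 = r0) (h1 : l1 = r1) (h2 : l2 = r2) (h3 : l3 = r3) (h4 : l4 = r4) (h5 : l5 = r5) (h6 : l6 = r6) (h7 : l7 = r7) (h8 : l8 = r8) (h9 : l9 = r9) :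
  g1 - g2 = (l0 - r0) + (l1 - r1) + (l2 - r2) + (l3 - r3) + (l4 - r4) + (l5 - r5) + (l6 - r6) + (l7 - r7) + (l8 - r8) + (l9 - r9) -> g1 = g2.
Proof. by move: h0 h1 h2 h3 h4 h5 h6 h7 h8 h9 => -> -> -> -> -> -> -> -> -> -> /eqP; rewrite !subrr ?addr0 subr_eq0 => /eqP. Qed.
Ltac zl10 V h0 h1 h2 h3 h4 h5 h6 h7 h8 h9 := apply: (@zL10 V _ _ _ _ _ _ _ _ _ _ _ _ _ _ _ _ _ _ _ _ _ _ h0 h1 h2 h3 h4 h5 h6 h7 h8 h9); zfin.

Section Jordan.
Context (K : numFieldType) (X : banachAlgType K) (sp : semiprime X) (D : X -> X).
Hypothesis HD : forall x y : X, D (x + y) = D x + D y.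
Hypothesis HT : forall x y : X, D (x ** y ** x) = D x ** y ** x + x ** D y ** x + x ** y ** D x.
Implicit Types a b c d x y z u r s : X.

Lemma D0 : D 0 = 0.
Proof. by apply: (@addrI _ (D 0)); rewrite -HD !addr0. Qed.
Lemma DN x : D (- x) = - D x.
Proof. by apply/eqP; rewrite -subr_eq0 opprK -HD addNr D0. Qed.
Ltac dnorm := rewrite ?HD ?DN ?D0; anorm; rewrite ?HD ?DN ?D0.

Lemma D1 : D baone = 0.
Proof.
apply: two_tor; have := HT baone baone; rewrite ?bamul1l ?bamul1r => h.
apply: (@zlem1 X _ _ _ _ (esym h)). anorm. zmod_eq.
Qed.

Lemma DJ x : D (x ** x) = D x ** x + x ** D x.
Proof. by have := HT x baone; rewrite !bamul1r D1 bamul0r bamul0l addr0. Qed.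

Lemma DL1 a b : D (a ** b + b ** a) = D a ** b + a ** D b + D b ** a + b ** D a.
Proof.
have h := DJ (a + b); have ha := DJ a; have hb := DJ b.
move: h; dnorm => h. dnorm.
zfrom3 X h ha hb.
Qed.

Definition Dl a b := locked (D (a ** b) - D a ** b - a ** D b).
Definition cm a b := locked (a ** b - b ** a).
Lemma DlE a b : Dl a b = D (a ** b) - D a ** b - a ** D b.
Proof. by rewrite /Dl -lock. Qed.
Lemma cmE a b : cm a b = a ** b - b ** a.
Proof. by rewrite /cm -lock. Qed.

Lemma Dl_anti a b : Dl a b + Dl b a = 0.
Proof. have h := DL1 a b; rewrite HD in h; rewrite !DlE; zl1 X h. Qed.

Lemma DL2 a y c : D (a ** y ** c + c ** y ** a) =
  D a ** y ** c + a ** D y ** c + a ** y ** D c + D c ** y ** a + c ** D y ** a + c ** y ** D a.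
Proof.
have h := HT (a + c) y; have ha := HT a y; have hc := HT c y.
move: h; dnorm => h; dnorm; zl3 X h (esym ha) (esym hc).
Qed.

Lemma Hers a b r : Dl a b ** r ** cm a b + cm a b ** r ** Dl a b = 0.
Proof.
have w1 := DL2 (a ** b) r (b ** a).
have w2a := HT a (b ** r ** b); have w2b := HT b (a ** r ** a).
have w3a := congr1 (fun t => a ** t ** a) (HT b r).
have w3b := congr1 (fun t => b ** t ** b) (HT a r).
have an1 := congr1 (fun t => a ** b ** r ** t) (DL1 a b).
have an2 := congr1 (fun t => t ** r ** (a ** b)) (DL1 a b).
move: w1 w2a w2b w3a w3b an1 an2 => /= w1 w2a w2b w3a w3b an1 an2.
rewrite HD in w1; rewrite HD in an1; rewrite HD in an2; move: w1 w2a w2b w3a w3b an1 an2; anorm => w1 w2a w2b w3a w3b an1 an2.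
rewrite !DlE !cmE.
zl7 X w1 (esym w2a) (esym w2b) (esym w3a) (esym w3b) an1 an2.
Qed.

Lemma P1 a b r : Dl a b ** r ** cm a b = 0.
Proof. by apply: sp_anti => // u; exact: Hers. Qed.
Lemma P1' a b r : cm a b ** r ** Dl a b = 0.
Proof. by have := Hers a b r; rewrite P1 add0r. Qed.

Lemma DlDl a c b : Dl (a + c) b = Dl a b + Dl c b.
Proof. rewrite !DlE; dnorm; zmod_eq. Qed.
Lemma DlDr a b d : Dl a (b + d) = Dl a b + Dl a d.
Proof. rewrite !DlE; dnorm; zmod_eq. Qed.
Lemma cmDl a c b : cm (a + c) b = cm a b + cm c b.
Proof. rewrite !cmE; anorm; zmod_eq. Qed.
Lemma cmDr a b d : cm a (b + d) = cm a b + cm a d.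
Proof. rewrite !cmE; anorm; zmod_eq. Qed.

Lemma pre0 l u v w : u ** v ** w = 0 -> l ** u ** v ** w = 0.
Proof. by move=> h; rewrite -(bamulA l u) -bamulA h bamul0r. Qed.

Lemma S2 a b c r : Dl a b ** r ** cm c b = 0.
Proof.
have Q : Dl a b ** r ** cm c b = - (Dl c b ** r ** cm a b).
  have := P1 (a + c) b r; rewrite DlDl cmDl; anorm; rewrite !P1 => h.
  apply/eqP; rewrite -subr_eq0 opprK; apply/eqP; rewrite -[RHS]h; zmod_eq.
apply: sp => s; rewrite {1}Q !bamulNl.
have h := pre0 (Dl c b ** r) _ _ _ (P1' a b s).
by rewrite !bamulA h !bamul0l oppr0.
Qed.

Lemma S2' a b c r : cm c b ** r ** Dl a b = 0.
Proof.
have Q : cm c b ** r ** Dl a b = - (cm a b ** r ** Dl c b).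
  have := P1' (a + c) b r; rewrite DlDl cmDl; anorm; rewrite !P1' => h.
  apply/eqP; rewrite -subr_eq0 opprK; apply/eqP; rewrite -[RHS]h; zmod_eq.
apply: sp => s; rewrite {2}Q !bamulNr.
have h := pre0 (cm c b ** r) _ _ _ (P1 a b s).
by rewrite !bamulA h !bamul0l oppr0.
Qed.

Lemma S3 a b c d r : Dl a b ** r ** cm c d = 0.
Proof.
have Q : Dl a b ** r ** cm c d = - (Dl a d ** r ** cm c b).
  have := S2 a (b + d) c r; rewrite DlDr cmDr; anorm; rewrite !S2 => h.
  apply/eqP; rewrite -subr_eq0 opprK; apply/eqP; rewrite -[RHS]h; zmod_eq.
apply: sp => s; rewrite {2}Q !bamulNr.
have h := pre0 (Dl a b ** r) _ _ _ (S2' a d c s).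
by rewrite !bamulA h !bamul0l oppr0.
Qed.

Lemma cen a b s : Dl a b ** s = s ** Dl a b.
Proof.
apply/eqP; rewrite -subr_eq0; apply/eqP; apply: sp => r.
have e : Dl a b ** s - s ** Dl a b = cm (Dl a b) s by rewrite cmE.
rewrite {2}e bamulBl bamulBl.
have h1 := S3 a b (Dl a b) s (s ** r); rewrite !bamulA in h1.
have h2 := pre0 s _ _ _ (S3 a b (Dl a b) s r).
by rewrite h1 h2 subrr.
Qed.

Lemma Dl0 a b : Dl a b = 0.
Proof.
set u := Dl a b.
have hu c d : u ** cm c d = 0 by have := S3 a b c d baone; rewrite bamul1r.
have ce y : u ** y = y ** u by exact: cen.
set w := cm a b.
have two : u + u = D w - cm (D a) b - cm a (D b).
  have h := Dl_anti a b; rewrite !DlE in h; move: h; dnorm => h; rewrite /u /w !DlE !cmE; dnorm; zl1 X h.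
have e1 : u ** (u + u) = u ** D w by rewrite two !bamulBr !hu !subr0.
have e2 := DL1 u w.
rewrite (hu a b) -(ce w) (hu a b) addr0 D0 in e2.
have e3 : u ** u ** D w = 0.
  apply: two_tor.
  have := congr1 (fun t => u ** t) e2; rewrite bamul0r !bamulDr => e4.
  have f1 : u ** (D u ** w) = 0 by rewrite bamulA ce -bamulA (hu a b) bamul0r.
  have f2 : u ** (D w ** u) = u ** u ** D w by rewrite -(ce (D w)) bamulA.
  have f3 : u ** (w ** D u) = 0 by rewrite bamulA (hu a b) bamul0l.
  rewrite f1 f2 f3 add0r addr0 bamulA in e4.
  by rewrite e4.
have uuu : u ** u ** u = 0.
  apply: two_tor; rewrite -bamulDr -bamulA e1 bamulA; exact: e3.
have cen2 y : u ** u ** y = y ** (u ** u).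
  by rewrite -bamulA ce bamulA ce -bamulA.
have uu : u ** u = 0.
  apply: sp => x; rewrite -cen2 !bamulA uuu !bamul0l //.
apply: sp => x; by rewrite -bamulA -(ce x) bamulA uu bamul0l.
Qed.

Lemma jordan_der x y : D (x ** y) = D x ** y + x ** D y.
Proof. have h := Dl0 x y; rewrite DlE in h; zl1 X h. Qed.
End Jordan.

Local Open Scope classical_set_scope.

Section An.
Context {R : realType} {X : banachAlgType R[i]}.

Lemma zeroB (v : X) (b : nat -> R) : (forall k, `|v| <= (b k)%:C%C) ->
  b @ \oo --> (0 : R) -> v = 0.
Proof.
move=> hb b0.
suff : `|v| = 0 by move/eqP; rewrite normr_eq0 => /eqP.
move: (normr_ge0 v) hb; case: (`|v|) => a c h0 hb.
have hc : c = 0 by move: h0; rewrite lecE /= => /andP[/eqP -> _].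
have hre k : a <= b k by move: (hb k); rewrite lecE /= => /andP[_].
have ha0 : 0 <= a by move: h0; rewrite lecE /= => /andP[].
have : a <= 0.
  rewrite leNgt; apply/negP => rpos.
  have := cvgr_lt _ b0 _ rpos; case=> N _ HN.
  by have := HN N (leqnn N) => /=; rewrite ltNge hre.
move=> hle; have hR : a = 0 by apply/eqP; rewrite eq_le hle ha0.
by rewrite hc hR.
Qed.

Definition nrm (v : X) : R := complex.Re `|v|.
Lemma nrmE v : `|v| = (nrm v)%:C%C.
Proof. by rewrite /nrm RRe_real // normr_real. Qed.
Lemma nrm_ge0 v : 0 <= nrm v.
Proof. by have := normr_ge0 v; rewrite nrmE lecR. Qed.
Lemma nrmD u v : nrm (u + v) <= nrm u + nrm v.
Proof. by have := ler_normD u v; rewrite !nrmE -rmorphD lecR. Qed.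
Lemma nrmN v : nrm (- v) = nrm v.
Proof. by rewrite /nrm normrN. Qed.
Lemma nrmB u v : nrm (u - v) <= nrm u + nrm v.
Proof. by rewrite -(nrmN v) nrmD. Qed.
Lemma nrmZ (a : R[i]) v : nrm (a *: v) = complex.Re `|a| * nrm v.
Proof.
have e : `|a| = (complex.Re `|a|)%:C%C by rewrite RRe_real // normr_real.
by rewrite /nrm normrZ {1}e -/(nrm v) nrmE -rmorphM.
Qed.
Lemma nrm_le v (r : R) : `|v| <= r%:C%C -> nrm v <= r.
Proof. by rewrite nrmE lecR. Qed.
Lemma nrm0 v : nrm v = 0 -> v = 0.
Proof. by move=> h; apply/eqP; rewrite -normr_eq0 nrmE h. Qed.
Lemma zeroB' (v : X) (b : nat -> R) : (forall k, nrm v <= b k) ->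
  b @ \oo --> (0 : R) -> v = 0.
Proof. by move=> hb b0; apply: (@zeroB v b) => // k; rewrite nrmE lecR. Qed.
Lemma Re_norm_real (r : R) : complex.Re `|r%:C%C| = `|r|.
Proof. by rewrite normc_def /= expr0n /= addr0 sqrtr_sqr. Qed.
End An.
Arguments nrm_le {R X v r} _.

Lemma cvg0D (R : realType) (a b : nat -> R) : a @ \oo --> (0:R) -> b @ \oo --> (0:R) ->
  (fun k => a k + b k) @ \oo --> (0:R).
Proof. by move=> ha hb; rewrite -(addr0 0); apply: cvgD. Qed.
Lemma cvg0Ml (R : realType) (c : R) (a : nat -> R) : a @ \oo --> (0:R) ->
  (fun k => c * a k) @ \oo --> (0:R).
Proof. by move=> ha; rewrite -(mulr0 c); apply: cvgMl_tmp. Qed.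
Lemma cvg0Mr (R : realType) (c : R) (a : nat -> R) : a @ \oo --> (0:R) ->
  (fun k => a k * c) @ \oo --> (0:R).
Proof. by move=> ha; rewrite -(mul0r c); apply: cvgMr_tmp. Qed.


Section EE.
Context {R : realType}.
Definition ee (t : R) : R[i] := (cos t +i* sin t)%C.
Lemma eeD a b : ee a * ee b = ee (a + b).
Proof. rewrite /ee cosD sinD /=. simpc. congr (Complex _ _); ring. Qed.
Lemma eeN a : ee a * ee (- a) = 1.
Proof. rewrite eeD subrr /ee cos0 sin0. by []. Qed.
Lemma eeC a : ee a + ee (- a) = (2 * cos a)%:C%C.
Proof. rewrite /ee cosN sinN. simpc. congr (Complex _ _); ring. Qed.
Lemma eei : ee (pi / 2) = 'i%C.
Proof. by rewrite /ee cos_pihalf sin_pihalf. Qed.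
Lemma eeX t n : ee t ^+ n = ee (n%:R * t).
Proof.
elim: n => [|n ih]; first by rewrite expr0 mul0r /ee cos0 sin0.
by rewrite exprS ih eeD; congr ee; rewrite mulrS mulrDl mul1r.
Qed.
End EE.

Section Main.
Context (R : realType) (n0 : nat) (X : banachAlgType R[i])
    (phi psi : X -> X -> R) (f : X -> X) (L : R).
Hypothesis n0pos : (0 < n0)%N.
Hypothesis sp : semiprime X.
Hypothesis phi0 : forall x y, 0 <= phi x y.
Hypothesis psi0 : forall x y, 0 <= psi x y.
Hypothesis f0 : f 0 = 0.
Hypothesis Hpsi : forall x y : X,
     `|f (x ** y ** x) - f x ** y ** x - x ** f y ** x - x ** y ** f x|
       <= (psi x y)%:C%C.
Hypothesis Hphi : forall (x y : X) (mu : R[i]), mu \in @circle_arc R n0 ->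
     `|f ((2 * mu) *: x + mu *: y) + f (mu *: x + (2 * mu) *: y)
        - mu *: (f (3 *: x) + f (3 *: y))| <= (phi x y)%:C%C.
Hypothesis HL01 : 0 < L < 1.
Hypothesis HL : forall x y : X, phi (2 *: x) (2 *: y) / 2 <= L * phi x y.
Hypothesis H8 : forall x y : X,
     (fun k : nat => ((8 : R) ^+ k)^-1 *
                     psi ((2 : R[i]) ^+ k *: x) ((2 : R[i]) ^+ k *: y))
       @ \oo --> (0 : R).
Hypothesis H4 : forall x y : X,
     (fun k : nat => ((4 : R) ^+ k)^-1 * psi ((2 : R[i]) ^+ k *: x) y)
       @ \oo --> (0 : R).

Lemma phi_iter n x y : phi ((2:R[i])^+n *: x) ((2:R[i])^+n *: y) <= (2*L)^+n * phi x y.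
Proof.
elim: n x y => [|n ih] x y; first by rewrite !expr0 !scale1r mul1r.
rewrite !exprS -!scalerA.
have h := HL ((2:R[i])^+n *: x) ((2:R[i])^+n *: y).
have h2 : phi (2 *: ((2:R[i])^+n *: x)) (2 *: ((2:R[i])^+n *: y)) <= 2 * L * phi ((2:R[i])^+n *: x) ((2:R[i])^+n *: y).
  by rewrite -mulrA -ler_pdivrMl // mulrC.
apply: (le_trans h2); rewrite -[in X in _ <= X]mulrA ler_pM2l ?mulr_gt0 //; last by case/andP: HL01.
Qed.

Lemma one_arc : (1 : R[i]) \in @circle_arc R n0.
Proof.
rewrite inE; exists 0; rewrite cos0 sin0; split => //.
by rewrite lexx /= divr_ge0 // mulr_ge0 // pi_ge0.
Qed.

Definition cc k := ((2:R[i])^+k)^-1 *: f ((2:R[i])^+k *: baone).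
Definition GG k z := ((4:R[i])^+k)^-1 *: f ((4:R[i])^+k *: z) - f z - cc k ** z - z ** cc k.

Lemma four_sq k : (2:R[i])^+k * (2:R[i])^+k = (4:R[i])^+k.
Proof. by rewrite -exprMn -natrM. Qed.

Lemma two_neq0 k : (2:R[i])^+k != 0.
Proof. by rewrite expf_neq0 // pnatr_eq0. Qed.

Lemma four_C k : (((4:R)^+k)^-1)%:C%C = ((4:R[i])^+k)^-1.
Proof. by rewrite fmorphV rmorphXn rmorph_nat. Qed.

Definition Dt x y := f (x ** y ** x) - f x ** y ** x - x ** f y ** x - x ** y ** f x.

Lemma GG_eq k z : GG k z = ((4:R[i])^+k)^-1 *: Dt ((2:R[i])^+k *: baone) z.
Proof.
rewrite /GG /cc /Dt -four_sq.
set s := (2:R[i])^+k; set a := f (s *: baone).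
have sn0 : s != 0 := two_neq0 k.
rewrite !(bamulZl, bamulZr, bamul1l, bamul1r) !scalerA.
rewrite !scalerDr !scalerN !scalerA.
have e1 : (s * s)^-1 * s = s^-1 by rewrite invfM -mulrA mulVf ?mulr1.
have e2 : (s * s)^-1 * (s * s) = 1 by rewrite mulVf // mulf_neq0.
rewrite e1 e2 scale1r; zmod_eq.
Qed.

Lemma GG_bound k z : nrm (GG k z) <= ((4:R)^+k)^-1 * psi ((2:R[i])^+k *: baone) z.
Proof.
rewrite GG_eq nrmZ -four_C Re_norm_real ger0_norm ?invr_ge0 ?exprn_ge0 //.
apply: ler_wpM2l; first by rewrite invr_ge0 exprn_ge0.
exact: nrm_le (Hpsi _ _).
Qed.

Lemma two_sc (w : X) : (2 : R[i]) *: w = w + w.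
Proof. by rewrite scaler_nat mulr2n. Qed.
Lemma three_sc (w : X) : (3 : R[i]) *: w = w + w + w.
Proof. by rewrite scaler_nat !mulrS mulr0n addr0 addrA. Qed.

Lemma nrm5 (a b c d e : X) : nrm (a - (b + c - d - e)) <= nrm a + nrm b + nrm c + nrm d + nrm e.
Proof.
have h1 := nrmB a (b + c - d - e); have h2 := nrmB (b + c - d) e.
have h3 := nrmB (b + c) d; have h4 := nrmD b c.
lra.
Qed.

Lemma four_pow k : (4:R[i])^+k = (2:R[i])^+(2*k).
Proof. by rewrite exprM expr2 -natrM. Qed.

Lemma phi_q k x y : phi ((4:R[i])^+k *: x) ((4:R[i])^+k *: y) <= (4:R)^+k * ((L^+2)^+k * phi x y).
Proof.
rewrite four_pow; apply: (le_trans (phi_iter _ _ _)).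
have h : (2*L)^+(2*k) = (4:R)^+k * (L^+2)^+k.
  rewrite exprM -exprMn; congr (_ ^+ _); by rewrite exprMn expr2 -natrM.
by rewrite h mulrA.
Qed.

Lemma lim_geo_phi p : (fun k => (L^+2)^+k * p) @ \oo --> (0:R).
Proof.
apply: cvg0Mr; apply: cvg_expr; case/andP: HL01 => L0 L1.
rewrite ger0_norm ?exprn_ge0 ?ltW //; rewrite expr2.
by rewrite -(mulr1 1) ltr_pM ?ltW.
Qed.

Lemma E1 x y : f (x + x + y) + f (x + y + y) = f (x + x + x) + f (y + y + y).
Proof.
apply/eqP; rewrite -subr_eq0; apply/eqP.
pose ps k z := ((4:R)^+k)^-1 * psi ((2:R[i])^+k *: baone) z.
apply: (@zeroB' _ _ _ (fun k => (L^+2)^+k * phi x y + ps k (x + x + y) + ps k (x + y + y)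
   + ps k (x + x + x) + ps k (y + y + y))); last first.
  by apply: cvg0D; [apply: cvg0D; [apply: cvg0D; [apply: cvg0D|]|]|];
    rewrite /ps; try apply: H4; apply: lim_geo_phi.
move=> k.
set q := (4:R[i])^+k.
set V' := f (q *: (x + x + y)) + f (q *: (x + y + y)) - f (q *: (x + x + x)) - f (q *: (y + y + y)).
have e : f (x + x + y) + f (x + y + y) - (f (x + x + x) + f (y + y + y)) =
   q^-1 *: V' - (GG k (x + x + y) + GG k (x + y + y) - GG k (x + x + x) - GG k (y + y + y)).
  rewrite /V' /GG -/q; anorm; rewrite !scalerDr !scalerN; zmod_eq.
rewrite e; apply: (le_trans (nrm5 _ _ _ _ _)).
rewrite -!addrA; apply: lerD; last first.
  by rewrite !addrA; do ! apply: lerD; apply: GG_bound.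
rewrite nrmZ -four_C Re_norm_real ger0_norm ?invr_ge0 ?exprn_ge0 //.
rewrite -[X in _ <= X](mulKf (_ : (4:R)^+k != 0)) ?expf_neq0 ?pnatr_eq0 //.
apply: ler_wpM2l; first by rewrite invr_ge0 exprn_ge0.
apply: (le_trans _ (phi_q k x y)); apply: nrm_le.
have := Hphi (q *: x) (q *: y) 1 one_arc; rewrite mulr1 !scale1r.
suff -> : V' = f (2 *: (q *: x) + q *: y) + f (q *: x + 2 *: (q *: y)) - (f (3 *: (q *: x)) + f (3 *: (q *: y))) by [].
rewrite /V' !two_sc !three_sc !scalerDr !addrA; zmod_eq.
Qed.

Lemma fP u : f u = f (u + u) + f (- u).
Proof.
set v := (3:R[i])^-1 *: u.
have hv : v + v + v = u by rewrite -three_sc scalerA mulfV ?scale1r // pnatr_eq0.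
have e := E1 (v + v) (- v).
have a1 : v + v + (v + v) + - v = u by rewrite -hv; zmod_eq.
have a2 : v + v + - v + - v = 0 by zmod_eq.
have a3 : v + v + (v + v) + (v + v) = u + u by rewrite -hv; zmod_eq.
have a4 : - v + - v + - v = - u by rewrite -hv; zmod_eq.
by rewrite a1 a2 a3 a4 f0 addr0 in e.
Qed.

Lemma f_odd u : f (- u) = - f u.
Proof.
set w := (2:R[i])^-1 *: u.
have hw : w + w = u by rewrite -two_sc scalerA mulfV ?scale1r // pnatr_eq0.
have e1 := fP w; have e2 := fP (- w); rewrite opprK in e2.
have a : - u = - w + - w by rewrite -hw opprD.
rewrite a -hw; zl2 X (esym e1) (esym e2).
Qed.

Lemma f_dbl u : f (u + u) = f u + f u.
Proof. have e := fP u; rewrite f_odd in e; zl1 X (esym e). Qed.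

Lemma f_tpl u : f (u + u + u) = f u + f u + f u.
Proof.
have e := E1 u 0; rewrite !addr0 f0 addr0 f_dbl in e; zl1 X (esym e).
Qed.

Lemma f_add x y : f (x + y) = f x + f y.
Proof.
have e1 := E1 (x + y) (- y); have e2 := E1 (x + y) (- x); have e3 := E1 x y.
have a1 : x + y + (x + y) + - y = x + x + y by zmod_eq.
have a2 : x + y + - y + - y = - (y - x) by zmod_eq.
have a3 : x + y + (x + y) + - x = x + y + y by zmod_eq.
have a4 : x + y + - x + - x = y - x by zmod_eq.
rewrite a1 a2 !f_tpl !f_odd in e1; rewrite a3 a4 !f_tpl !f_odd in e2.
set t := f (x + y) - f x - f y.
have h6 : t + t + t + t + t + t = 0.
  rewrite !f_tpl in e3; rewrite /t; zl3 X (esym e1) (esym e2) e3.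
apply/eqP; rewrite -subr_eq0 opprD addrA -/t; apply/eqP.
have : (6 : R[i]) *: t = 0.
  by rewrite scaler_nat !mulrS mulr0n addr0 -h6; zmod_eq.
move/eqP; rewrite scaler_eq0 => /orP[|/eqP //]. by rewrite pnatr_eq0.
Qed.

Lemma f_muln z n : f (z *+ n) = f z *+ n.
Proof. elim: n => [|n ih]; first by rewrite !mulr0n f0. by rewrite !mulrS f_add ih. Qed.
Lemma f_nat z n : f (n%:R *: z) = n%:R *: f z.
Proof. by rewrite !scaler_nat f_muln. Qed.

Lemma nrm_muln (w : X) n : nrm (w *+ n) = nrm w *+ n.
Proof. by rewrite /nrm normrMn raddfMn. Qed.

Lemma f_arc mu x : mu \in @circle_arc R n0 -> f (mu *: x) = mu *: f x.
Proof.
move=> Hmu; apply/eqP; rewrite -subr_eq0; apply/eqP.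
set w := f (mu *: x) - mu *: f x.
have [L0 L1] : 0 < L /\ L < 1 by case/andP: HL01.
apply: (@zeroB' _ _ _ (fun k => L^+k * phi x 0)); last first.
  by apply: cvg0Mr; apply: cvg_expr; rewrite ger0_norm ?ltW.
move=> k.
have h := nrm_le (Hphi ((2:R[i])^+k *: x) ((2:R[i])^+k *: 0) mu Hmu).
have hp := phi_iter k x 0.
rewrite !scaler0 in h hp; rewrite !addr0 f0 addr0 in h.
have sk : (2:R[i])^+k = (2^k)%:R by rewrite natrX.
rewrite sk in h; rewrite sk scaler_nat in hp.
have a1 : (2 * mu) *: ((2^k)%:R *: x) = (2 * 2^k)%:R *: (mu *: x).
  by rewrite !scalerA; congr (_ *: _); rewrite natrM; ring.
have a2 : mu *: ((2^k)%:R *: x) = (2^k)%:R *: (mu *: x).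
  by rewrite !scalerA mulrC.
have a3 : (3 : R[i]) *: ((2^k)%:R *: x) = (3 * 2^k)%:R *: x.
  by rewrite !scalerA natrM.
rewrite a1 a2 a3 !f_nat !scaler_nat -scalerMnr in h.
have e : f (mu *: x) *+ (2 * 2 ^ k) + f (mu *: x) *+ 2 ^ k - (mu *: f x) *+ (3 * 2 ^ k)
   = w *+ (3 * 2^k).
  by rewrite /w mulrnBl -mulrnDr (_ : (2 * 2 ^ k + 2 ^ k = 3 * 2 ^ k)%N) // mulSn addnC.
rewrite e nrm_muln in h.
have h' := le_trans h hp.
have e2 : nrm w *+ (3 * 2 ^ k) = (2:R)^+k * (3 * nrm w).
  by rewrite -(mulr_natr (nrm w)) natrM natrX; ring.
have e3 : (2 * L)^+k * phi x 0 = (2:R)^+k * (L^+k * phi x 0) by rewrite exprMn mulrA.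
rewrite e2 e3 ler_pM2l ?exprn_gt0 // in h'.
have := nrm_ge0 w; have := phi0 x 0; have := exprn_ge0 k (ltW L0).
move=> h1 h2 h3; nra.
Qed.

Definition Pl (a : R[i]) := forall x, f (a *: x) = a *: f x.
Lemma PlM a b : Pl a -> Pl b -> Pl (a * b).
Proof. by move=> ha hb x; rewrite -scalerA ha hb scalerA. Qed.
Lemma PlD a b : Pl a -> Pl b -> Pl (a + b).
Proof. by move=> ha hb x; rewrite !scalerDl f_add ha hb. Qed.
Lemma PlV a : a != 0 -> Pl a -> Pl a^-1.
Proof.
move=> a0 ha x.
have e : x = a *: (a^-1 *: x) by rewrite scalerA mulfV ?scale1r.
by rewrite {2}e ha scalerA mulVf ?scale1r.
Qed.
Lemma PlX a n : Pl a -> Pl (a ^+ n).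
Proof. move=> ha; elim: n => [|n ih] x; first by rewrite expr0 !scale1r. by rewrite exprS; apply: PlM. Qed.
Lemma Pln n : Pl n%:R.
Proof. by move=> x; apply: f_nat. Qed.

Lemma Pl_ee t : 0 <= t <= pi -> Pl (ee t).
Proof.
case/andP=> t0 tpi.
have n0R : 0 < (n0%:R : R) by rewrite ltr0n.
have -> : ee t = ee (t / n0%:R) ^+ n0.
  by rewrite eeX; congr ee; rewrite mulrC mulfVK // gt_eqF.
apply: PlX => x; apply: f_arc.
rewrite inE; exists (t / n0%:R); split => //.
rewrite divr_ge0 ?(ltW n0R) //=; rewrite ler_pM2r ?invr_gt0 //.
by apply: (le_trans tpi); rewrite ler_peMl ?pi_ge0 // ler1n.
Qed.

Lemma Pl_real_small r : -1 <= r <= 1 -> Pl r%:C%C.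
Proof.
move=> hr.
have [hra ca] := acos_def hr.
have hp := Pl_ee (acos r) hra.
have hn : Pl (ee (- acos r)).
  have -> : ee (- acos r) = (ee (acos r))^-1.
    by apply/esym/mulr1_eq; rewrite eeN.
  apply: PlV => //; apply/eqP => h; have := eeN (acos r); rewrite h mul0r.
  by move/eqP; rewrite eq_sym oner_eq0.
have h2 : Pl (2 * cos (acos r))%:C%C by rewrite -eeC; apply: PlD.
rewrite ca in h2.
have -> : r%:C%C = 2^-1 * (2 * r)%:C%C.
  by rewrite rmorphM rmorph_nat mulrA mulVf ?mul1r // pnatr_eq0.
apply: PlM => //; apply: PlV; first by rewrite pnatr_eq0.
exact: Pln.
Qed.

Lemma Pl_real r : Pl r%:C%C.
Proof.
set N := Num.Def.archi_bound `|r|.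
have hN := archi_boundP (normr_ge0 r); rewrite -/N in hN.
have N0 : (0 : R) < N%:R by apply: le_lt_trans hN.
have Nn : N != 0%N by rewrite -lt0n -(ltr0n R).
have -> : r%:C%C = (N%:R : R[i]) * (r / N%:R)%:C%C.
  by rewrite rmorphM fmorphV rmorph_nat mulrA mulrC mulrA mulVf ?mul1r // pnatr_eq0.
apply: PlM; first exact: Pln.
apply: Pl_real_small; rewrite -ler_norml normrM normfV (gtr0_norm N0) ler_pdivrMr //.
by rewrite mul1r ltW.
Qed.

Lemma Pl_all a : Pl a.
Proof.
rewrite [a]complexE; apply: PlD; first exact: Pl_real.
apply: PlM; last exact: Pl_real.
rewrite -(@eei R); apply: Pl_ee.
by rewrite divr_ge0 ?pi_ge0 //= ler_pdivrMr // ler_peMr ?pi_ge0 // ler1n.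
Qed.

Lemma f_lin a x : f (a *: x) = a *: f x.
Proof. exact: Pl_all. Qed.

Lemma Dt_scale k x y : Dt ((2:R[i])^+k *: x) y = ((4:R[i])^+k) *: Dt x y.
Proof.
rewrite /Dt -four_sq; set s := (2:R[i])^+k.
rewrite !(bamulZl, bamulZr) !f_lin !(bamulZl, bamulZr) !scalerA !scalerBr.
zmod_eq.
Qed.

Lemma Dt0 x y : Dt x y = 0.
Proof.
apply: (@zeroB' _ _ _ (fun k => ((4:R)^+k)^-1 * psi ((2:R[i])^+k *: x) y)); last exact: H4.
move=> k.
have -> : Dt x y = ((4:R[i])^+k)^-1 *: Dt ((2:R[i])^+k *: x) y.
  by rewrite Dt_scale scalerA mulVf ?scale1r // expf_neq0 // pnatr_eq0.
rewrite nrmZ -four_C Re_norm_real ger0_norm ?invr_ge0 ?exprn_ge0 //.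
apply: ler_wpM2l; first by rewrite invr_ge0 exprn_ge0.
exact: nrm_le (Hpsi _ _).
Qed.

Lemma f_HT x y : f (x ** y ** x) = f x ** y ** x + x ** f y ** x + x ** y ** f x.
Proof. have h := Dt0 x y; rewrite /Dt in h; zl1 X h. Qed.

Lemma final : linear_derivation f.
Proof.
split; first by move=> a x y; rewrite f_add f_lin.
move=> x y; exact: (@jordan_der _ X sp f f_add f_HT).
Qed.
End Main.

Theorem theorem2p10 (R : realType) (n0 : nat) (X : banachAlgType R[i])
    (phi psi : X -> X -> R) (f : X -> X) (L : R) :
  (0 < n0)%N ->
  semiprime X ->
  (forall x y, 0 <= phi x y) ->
  (forall x y, 0 <= psi x y) ->
  f 0 = 0 ->
  (forall x y : X,
     `|f (x ** y ** x) - f x ** y ** x - x ** f y ** x - x ** y ** f x|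
       <= (psi x y)%:C%C) ->
  (forall (x y : X) (mu : R[i]), mu \in @circle_arc R n0 ->
     `|f ((2 * mu) *: x + mu *: y) + f (mu *: x + (2 * mu) *: y)
        - mu *: (f (3 *: x) + f (3 *: y))| <= (phi x y)%:C%C) ->
  0 < L < 1 ->
  (forall x y : X, phi (2 *: x) (2 *: y) / 2 <= L * phi x y) ->
  (forall x y : X,
     (fun k : nat => ((8 : R) ^+ k)^-1 *
                     psi ((2 : R[i]) ^+ k *: x) ((2 : R[i]) ^+ k *: y))
       @ \oo --> (0 : R)) ->
  (forall x y : X,
     (fun k : nat => ((4 : R) ^+ k)^-1 * psi ((2 : R[i]) ^+ k *: x) y)
       @ \oo --> (0 : R)) ->
  linear_derivation f.
Proof.
move=> n0pos sp phi0 psi0 f0 Hpsi Hphi HL01 HL H8 H4.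
exact: (@final R n0 X phi psi f L n0pos sp phi0 f0 Hpsi Hphi HL01 HL H4).
Qed.
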